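(* The relation algebra $32_{65}$ has a representation over a set of $1024$ points; that is, $1024 \in \operatorname{Spec}(32_{65})$. In fact it has a group representation over $G=(\mathbb{Z}/2\mathbb{Z})^{10}$: there is a partition $G\setminus\{0\}=A\cup B_1\cup B_2$ with $A=\{x: 1\le |x|\le 6\}$ and $B_1\cup B_2=\{x:|x|\ge 7\}$ (where $|x|$ is the number of coordinates equal to $1$) such that $A+A=G$, $A+B_1=A+B_2=G\setminus\{0\}$, $B_1+B_1=B_2+B_2=A\cup\{0\}$, and $B_1+B_2=A$, and the map sending $1'\mapsto\{(x,x)\}$, $a\mapsto\{(x,y): x+y\in A\}$, $b\mapsto\{(x,y):x+y\in B_1\}$, $c\mapsto\{(x,y):x+y\in B_2\}$ extends to a representation of $32_{65}$ on $G$.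
   Context: $32_{65}$ is the finite integral symmetric relation algebra with atoms $1'$ (identity), $a$, $b$, $c$, all symmetric, in which a diversity cycle $xyz$ (with $x,y,z\in\{a,b,c\}$) is mandatory (i.e. $x;y\ge z$) if it involves $a$ and forbidden (i.e. $x;y\cdot z=0$) otherwise; in particular $a$ is flexible. A representation of a (simple) relation algebra over a set $U$ is an embedding into the full relation algebra $\langle \mathcal P(U\times U),\cup,{}^c,\circ,{}^{-1},\mathrm{Id}_U\rangle$. $\operatorname{Spec}(A)$ is the set of cardinals $\alpha\le\omega$ such that $A$ has a representation over a set of cardinality $\alpha$. For subsets $X,Y$ of a group, $X+Y=\{x+y:x\in X,y\in Y\}$. *)

(* Defs.v *)
From HB Require Import structures.
From mathcomp Require Import all_boot all_order all_algebra.
Set Implicit Arguments. Unset Strict Implicit. Unset Printing Implicit Defensive.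
Import GRing.Theory.

(** Atoms of 32_65: the identity 1' (here [e]) and the diversity atoms a, b, c. *)
Inductive atom := e | a | b | c.

Definition atom_to (x : atom) : 'I_4 :=
  match x with e => inord 0 | a => inord 1 | b => inord 2 | c => inord 3 end.
Definition atom_of (i : 'I_4) : atom :=
  match val i with 0 => e | 1 => a | 2 => b | _ => c end.
Lemma atom_toK : cancel atom_to atom_of.
Proof. by case; rewrite /atom_of /= inordK. Qed.
HB.instance Definition _ := Finite.copy atom (can_type atom_toK).

(** [cyc x y z] : the cycle xyz is mandatory, i.e. x;y >= z (atoms).
    Identity atom: e;x = x;e = x; diversity atoms are symmetric, so
    x;y >= 1' iff y = x; a diversity cycle is mandatory iff it involves a. *)
Definition cyc (x y z : atom) : bool :=
  if x == e then z == y
  else if y == e then z == x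
  else if z == e then x == y
  else [|| x == a, y == a | z == a].

Definition RA := {set atom}.
Definition ra_join (X Y : RA) : RA := X :|: Y.
Definition ra_compl (X : RA) : RA := ~: X.
Definition ra_comp (X Y : RA) : RA :=
  [set z | [exists x in X, exists y in Y, cyc x y z]].
Definition ra_conv (X : RA) : RA := X. (* all atoms are symmetric *)
Definition ra_id : RA := [set e].

Definition rel_comp (U : finType) (R S : {set U * U}) : {set U * U} :=
  [set p | [exists w, ((p.1, w) \in R) && ((w, p.2) \in S)]].
Definition rel_conv (U : finType) (R : {set U * U}) : {set U * U} :=
  [set p | (p.2, p.1) \in R].
Definition rel_id (U : finType) : {set U * U} := [set p | p.1 == p.2].

Definition is_representation (U : finType) (h : RA -> {set U * U}) : Prop :=
  injective h /\
  (forall X Y, h (ra_join X Y) = h X :|: h Y) /\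
  (forall X, h (ra_compl X) = ~: h X) /\
  (forall X Y, h (ra_comp X Y) = rel_comp (h X) (h Y)) /\
  (forall X, h (ra_conv X) = rel_conv (h X)) /\
  h ra_id = rel_id U.

Definition in_Spec_fin (n : nat) : Prop :=
  exists U : finType, #|U| = n /\ exists h : RA -> {set U * U}, is_representation h.

Definition G := 'rV['F_2]_10.
Definition wt (x : G) : nat := #|[set i | x ord0 i != 0%R]|.
Definition sumset (X Y : {set G}) : {set G} := [set (x + y)%R | x in X, y in Y].

Definition grp_img (A B1 B2 : {set G}) (z : atom) : {set G * G} :=
  match z with
  | e => [set p | p.1 == p.2]
  | a => [set p | (p.1 + p.2)%R \in A]
  | b => [set p | (p.1 + p.2)%R \in B1]
  | c => [set p | (p.1 + p.2)%R \in B2]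
  end.

(* Main.v *)
Require Import Defs.
From HB Require Import structures.
From mathcomp Require Import all_boot all_order all_algebra.
Import GRing.Theory.
Local Open Scope ring_scope.
Set Implicit Arguments. Unset Strict Implicit. Unset Printing Implicit Defensive.

Inductive tr := Lf of atom | Nd of tr & tr.
Fixpoint look (T : tr) (s : seq bool) : atom :=
  match T, s with
  | Nd l r, x :: s' => look (if x then r else l) s'
  | Lf z, _ => z
  | Nd _ _, [::] => e
  end.
Definition theTree : tr := (Nd (Nd (Nd (Nd (Nd (Nd (Nd (Nd (Nd (Nd (Lf e) (Lf a)) (Nd (Lf a) (Lf a))) (Nd (Nd (Lf a) (Lf a)) (Nd (Lf a) (Lf a)))) (Nd (Nd (Nd (Lf a) (Lf a)) (Nd (Lf a) (Lf a))) (Nd (Nd (Lf a) (Lf a)) (Nd (Lf a) (Lf a))))) (Nd (Nd (Nd (Nd (Lf a) (Lf a)) (Nd (Lf a) (Lf a))) (Nd (Nd (Lf a) (Lf a)) (Nd (Lf a) (Lf a)))) (Nd (Nd (Nd (Lf a) (Lf a)) (Nd (Lf a) (Lf a))) (Nd (Nd (Lf a) (Lf a)) (Nd (Lf a) (Lf a)))))) (Nd (Nd (Nd (Nd (Nd (Lf a) (Lf a)) (Nd (Lf a) (Lf a))) (Nd (Nd (Lf a) (Lf a)) (Nd (Lf a) (Lf a)))) (Nd (Nd (Nd (Lf a) (Lf a)) (Nd (Lf a) (Lf a))) (Nd (Nd (Lf a) (Lf a)) (Nd (Lf a) (Lf a))))) (Nd (Nd (Nd (Nd (Lf a) (Lf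 a)) (Nd (Lf a) (Lf a))) (Nd (Nd (Lf a) (Lf a)) (Nd (Lf a) (Lf a)))) (Nd (Nd (Nd (Lf a) (Lf a)) (Nd (Lf a) (Lf a))) (Nd (Nd (Lf a) (Lf a)) (Nd (Lf a) (Lf a))))))) (Nd (Nd (Nd (Nd (Nd (Nd (Lf a) (Lf a)) (Nd (Lf a) (Lf a))) (Nd (Nd (Lf a) (Lf a)) (Nd (Lf a) (Lf a)))) (Nd (Nd (Nd (Lf a) (Lf a)) (Nd (Lf a) (Lf a))) (Nd (Nd (Lf a) (Lf a)) (Nd (Lf a) (Lf a))))) (Nd (Nd (Nd (Nd (Lf a) (Lf a)) (Nd (Lf a) (Lf a))) (Nd (Nd (Lf a) (Lf a)) (Nd (Lf a) (Lf a)))) (Nd (Nd (Nd (Lf a) (Lf a)) (Nd (Lf a) (Lf a))) (Nd (Nd (Lf a) (Lf a)) (Nd (Lf a) (Lf a)))))) (Nd (Nd (Nd (Nd (Nd (Lf a) (Lf a)) (Nd (Lf a) (Lf a))) (Nd (Nd (Lf a) (Lf a)) (Nd (Lf a) (Lf a)))) (Nd (Nd (Nd (Lf a) (Lf a)) (Nd (Lf a) (Lf a))) (Nd (Nd (Lf a) (Lf a)) (Nd (Lf a) (Lf a))))) (Nd (Nd (Nd (Nd (Lf a) (Lf a)) (Nd (Lf a) (Lf a))) (Nd (Nd (Lf a) (Lf a)) (Nd (Lf a) (Lf a)))) (Nd (Nd (Nd (Lf a) (Lf a)) (Nd (Lf a) (Lf a))) (Nd (Nd (Lf a) (Lf a))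 (Nd (Lf a) (Lf b)))))))) (Nd (Nd (Nd (Nd (Nd (Nd (Nd (Lf a) (Lf a)) (Nd (Lf a) (Lf a))) (Nd (Nd (Lf a) (Lf a)) (Nd (Lf a) (Lf a)))) (Nd (Nd (Nd (Lf a) (Lf a)) (Nd (Lf a) (Lf a))) (Nd (Nd (Lf a) (Lf a)) (Nd (Lf a) (Lf a))))) (Nd (Nd (Nd (Nd (Lf a) (Lf a)) (Nd (Lf a) (Lf a))) (Nd (Nd (Lf a) (Lf a)) (Nd (Lf a) (Lf a)))) (Nd (Nd (Nd (Lf a) (Lf a)) (Nd (Lf a) (Lf a))) (Nd (Nd (Lf a) (Lf a)) (Nd (Lf a) (Lf a)))))) (Nd (Nd (Nd (Nd (Nd (Lf a) (Lf a)) (Nd (Lf a) (Lf a))) (Nd (Nd (Lf a) (Lf a)) (Nd (Lf a) (Lf a)))) (Nd (Nd (Nd (Lf a) (Lf a)) (Nd (Lf a) (Lf a))) (Nd (Nd (Lf a) (Lf a)) (Nd (Lf a) (Lf a))))) (Nd (Nd (Nd (Nd (Lf a) (Lf a)) (Nd (Lf a) (Lf a))) (Nd (Nd (Lf a) (Lf a)) (Nd (Lf a) (Lf a)))) (Nd (Nd (Nd (Lf a) (Lf a)) (Nd (Lf a) (Lf a))) (Nd (Nd (Lf a) (Lf a)) (Nd (Lf a) (Lf b))))))) (Nd (Nd (Nd (Nd (Nd (Nd (Lf a) (Lf a)) (Nd (Lf a) (Lf a))) (Nd (Nd (Lf a) (Lf a)) (Nd (Lf a) (Lf a)))) (Nd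 (Nd (Nd (Lf a) (Lf a)) (Nd (Lf a) (Lf a))) (Nd (Nd (Lf a) (Lf a)) (Nd (Lf a) (Lf a))))) (Nd (Nd (Nd (Nd (Lf a) (Lf a)) (Nd (Lf a) (Lf a))) (Nd (Nd (Lf a) (Lf a)) (Nd (Lf a) (Lf a)))) (Nd (Nd (Nd (Lf a) (Lf a)) (Nd (Lf a) (Lf a))) (Nd (Nd (Lf a) (Lf a)) (Nd (Lf a) (Lf c)))))) (Nd (Nd (Nd (Nd (Nd (Lf a) (Lf a)) (Nd (Lf a) (Lf a))) (Nd (Nd (Lf a) (Lf a)) (Nd (Lf a) (Lf a)))) (Nd (Nd (Nd (Lf a) (Lf a)) (Nd (Lf a) (Lf a))) (Nd (Nd (Lf a) (Lf a)) (Nd (Lf a) (Lf c))))) (Nd (Nd (Nd (Nd (Lf a) (Lf a)) (Nd (Lf a) (Lf a))) (Nd (Nd (Lf a) (Lf a)) (Nd (Lf a) (Lf c)))) (Nd (Nd (Nd (Lf a) (Lf a)) (Nd (Lf a) (Lf b))) (Nd (Nd (Lf a) (Lf b)) (Nd (Lf c) (Lf b))))))))) (Nd (Nd (Nd (Nd (Nd (Nd (Nd (Nd (Lf a) (Lf a)) (Nd (Lf a) (Lf a))) (Nd (Nd (Lf a) (Lf a)) (Nd (Lf a) (Lf a)))) (Nd (Nd (Nd (Lf a) (Lf a)) (Nd (Lf a) (Lf a))) (Nd (Nd (Lf a) (Lf a)) (Nd (Lf a) (Lf a))))) (Nd (Nd (Nd (Nd (Lf a) (Lf a)) (Nd (Lf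 a) (Lf a))) (Nd (Nd (Lf a) (Lf a)) (Nd (Lf a) (Lf a)))) (Nd (Nd (Nd (Lf a) (Lf a)) (Nd (Lf a) (Lf a))) (Nd (Nd (Lf a) (Lf a)) (Nd (Lf a) (Lf a)))))) (Nd (Nd (Nd (Nd (Nd (Lf a) (Lf a)) (Nd (Lf a) (Lf a))) (Nd (Nd (Lf a) (Lf a)) (Nd (Lf a) (Lf a)))) (Nd (Nd (Nd (Lf a) (Lf a)) (Nd (Lf a) (Lf a))) (Nd (Nd (Lf a) (Lf a)) (Nd (Lf a) (Lf a))))) (Nd (Nd (Nd (Nd (Lf a) (Lf a)) (Nd (Lf a) (Lf a))) (Nd (Nd (Lf a) (Lf a)) (Nd (Lf a) (Lf a)))) (Nd (Nd (Nd (Lf a) (Lf a)) (Nd (Lf a) (Lf a))) (Nd (Nd (Lf a) (Lf a)) (Nd (Lf a) (Lf b))))))) (Nd (Nd (Nd (Nd (Nd (Nd (Lf a) (Lf a)) (Nd (Lf a) (Lf a))) (Nd (Nd (Lf a) (Lf a)) (Nd (Lf a) (Lf a)))) (Nd (Nd (Nd (Lf a) (Lf a)) (Nd (Lf a) (Lf a))) (Nd (Nd (Lf a) (Lf a)) (Nd (Lf a) (Lf a))))) (Nd (Nd (Nd (Nd (Lf a) (Lf a)) (Nd (Lf a) (Lf a))) (Nd (Nd (Lf a) (Lf a)) (Nd (Lf a) (Lf a)))) (Nd (Nd (Nd (Lf a) (Lf a)) (Nd (Lf a) (Lf a))) (Nd (Nd (Lf a) (Lf a)) (Nd (Lf a)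 (Lf c)))))) (Nd (Nd (Nd (Nd (Nd (Lf a) (Lf a)) (Nd (Lf a) (Lf a))) (Nd (Nd (Lf a) (Lf a)) (Nd (Lf a) (Lf a)))) (Nd (Nd (Nd (Lf a) (Lf a)) (Nd (Lf a) (Lf a))) (Nd (Nd (Lf a) (Lf a)) (Nd (Lf a) (Lf c))))) (Nd (Nd (Nd (Nd (Lf a) (Lf a)) (Nd (Lf a) (Lf a))) (Nd (Nd (Lf a) (Lf a)) (Nd (Lf a) (Lf c)))) (Nd (Nd (Nd (Lf a) (Lf a)) (Nd (Lf a) (Lf c))) (Nd (Nd (Lf a) (Lf b)) (Nd (Lf b) (Lf c)))))))) (Nd (Nd (Nd (Nd (Nd (Nd (Nd (Lf a) (Lf a)) (Nd (Lf a) (Lf a))) (Nd (Nd (Lf a) (Lf a)) (Nd (Lf a) (Lf a)))) (Nd (Nd (Nd (Lf a) (Lf a)) (Nd (Lf a) (Lf a))) (Nd (Nd (Lf a) (Lf a)) (Nd (Lf a) (Lf a))))) (Nd (Nd (Nd (Nd (Lf a) (Lf a)) (Nd (Lf a) (Lf a))) (Nd (Nd (Lf a) (Lf a)) (Nd (Lf a) (Lf a)))) (Nd (Nd (Nd (Lf a) (Lf a)) (Nd (Lf a) (Lf a))) (Nd (Nd (Lf a) (Lf a)) (Nd (Lf a) (Lf b)))))) (Nd (Nd (Nd (Nd (Nd (Lf a) (Lf a)) (Nd (Lf a) (Lf a))) (Nd (Nd (Lf a) (Lf a)) (Nd (Lf a) (Lf a)))) (Nd (Nd (Nd (Lf a)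 (Lf a)) (Nd (Lf a) (Lf a))) (Nd (Nd (Lf a) (Lf a)) (Nd (Lf a) (Lf c))))) (Nd (Nd (Nd (Nd (Lf a) (Lf a)) (Nd (Lf a) (Lf a))) (Nd (Nd (Lf a) (Lf a)) (Nd (Lf a) (Lf b)))) (Nd (Nd (Nd (Lf a) (Lf a)) (Nd (Lf a) (Lf c))) (Nd (Nd (Lf a) (Lf c)) (Nd (Lf b) (Lf b))))))) (Nd (Nd (Nd (Nd (Nd (Nd (Lf a) (Lf a)) (Nd (Lf a) (Lf a))) (Nd (Nd (Lf a) (Lf a)) (Nd (Lf a) (Lf a)))) (Nd (Nd (Nd (Lf a) (Lf a)) (Nd (Lf a) (Lf a))) (Nd (Nd (Lf a) (Lf a)) (Nd (Lf a) (Lf b))))) (Nd (Nd (Nd (Nd (Lf a) (Lf a)) (Nd (Lf a) (Lf a))) (Nd (Nd (Lf a) (Lf a)) (Nd (Lf a) (Lf c)))) (Nd (Nd (Nd (Lf a) (Lf a)) (Nd (Lf a) (Lf b))) (Nd (Nd (Lf a) (Lf b)) (Nd (Lf c) (Lf b)))))) (Nd (Nd (Nd (Nd (Nd (Lf a) (Lf a)) (Nd (Lf a) (Lf a))) (Nd (Nd (Lf a) (Lf a)) (Nd (Lf a) (Lf b)))) (Nd (Nd (Nd (Lf a) (Lf a)) (Nd (Lf a) (Lf b))) (Nd (Nd (Lf a) (Lf b)) (Nd (Lf c) (Lf c))))) (Nd (Nd (Nd (Nd (Lf a) (Lf a)) (Nd (Lf a) (Lf b))) (Nd (Nd (Lf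 a) (Lf b)) (Nd (Lf b) (Lf c)))) (Nd (Nd (Nd (Lf a) (Lf c)) (Nd (Lf c) (Lf b))) (Nd (Nd (Lf b) (Lf c)) (Nd (Lf b) (Lf b)))))))))) (Nd (Nd (Nd (Nd (Nd (Nd (Nd (Nd (Nd (Lf a) (Lf a)) (Nd (Lf a) (Lf a))) (Nd (Nd (Lf a) (Lf a)) (Nd (Lf a) (Lf a)))) (Nd (Nd (Nd (Lf a) (Lf a)) (Nd (Lf a) (Lf a))) (Nd (Nd (Lf a) (Lf a)) (Nd (Lf a) (Lf a))))) (Nd (Nd (Nd (Nd (Lf a) (Lf a)) (Nd (Lf a) (Lf a))) (Nd (Nd (Lf a) (Lf a)) (Nd (Lf a) (Lf a)))) (Nd (Nd (Nd (Lf a) (Lf a)) (Nd (Lf a) (Lf a))) (Nd (Nd (Lf a) (Lf a)) (Nd (Lf a) (Lf a)))))) (Nd (Nd (Nd (Nd (Nd (Lf a) (Lf a)) (Nd (Lf a) (Lf a))) (Nd (Nd (Lf a) (Lf a)) (Nd (Lf a) (Lf a)))) (Nd (Nd (Nd (Lf a) (Lf a)) (Nd (Lf a) (Lf a))) (Nd (Nd (Lf a) (Lf a)) (Nd (Lf a) (Lf a))))) (Nd (Nd (Nd (Nd (Lf a) (Lf a)) (Nd (Lf a) (Lf a))) (Nd (Nd (Lf a) (Lf a)) (Nd (Lf a) (Lf a)))) (Nd (Nd (Nd (Lf a) (Lf a)) (Nd (Lf a) (Lf a))) (Nd (Nd (Lf a) (Lf a)) (Nd (Lf a) (Lf b)))))))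 (Nd (Nd (Nd (Nd (Nd (Nd (Lf a) (Lf a)) (Nd (Lf a) (Lf a))) (Nd (Nd (Lf a) (Lf a)) (Nd (Lf a) (Lf a)))) (Nd (Nd (Nd (Lf a) (Lf a)) (Nd (Lf a) (Lf a))) (Nd (Nd (Lf a) (Lf a)) (Nd (Lf a) (Lf a))))) (Nd (Nd (Nd (Nd (Lf a) (Lf a)) (Nd (Lf a) (Lf a))) (Nd (Nd (Lf a) (Lf a)) (Nd (Lf a) (Lf a)))) (Nd (Nd (Nd (Lf a) (Lf a)) (Nd (Lf a) (Lf a))) (Nd (Nd (Lf a) (Lf a)) (Nd (Lf a) (Lf c)))))) (Nd (Nd (Nd (Nd (Nd (Lf a) (Lf a)) (Nd (Lf a) (Lf a))) (Nd (Nd (Lf a) (Lf a)) (Nd (Lf a) (Lf a)))) (Nd (Nd (Nd (Lf a) (Lf a)) (Nd (Lf a) (Lf a))) (Nd (Nd (Lf a) (Lf a)) (Nd (Lf a) (Lf b))))) (Nd (Nd (Nd (Nd (Lf a) (Lf a)) (Nd (Lf a) (Lf a))) (Nd (Nd (Lf a) (Lf a)) (Nd (Lf a) (Lf b)))) (Nd (Nd (Nd (Lf a) (Lf a)) (Nd (Lf a) (Lf c))) (Nd (Nd (Lf a) (Lf b)) (Nd (Lf c) (Lf c)))))))) (Nd (Nd (Nd (Nd (Nd (Nd (Nd (Lf a) (Lf a)) (Nd (Lf a) (Lf a))) (Nd (Nd (Lf a) (Lf a)) (Nd (Lf a) (Lf a)))) (Nd (Nd (Nd (Lf a) (Lf a))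 (Nd (Lf a) (Lf a))) (Nd (Nd (Lf a) (Lf a)) (Nd (Lf a) (Lf a))))) (Nd (Nd (Nd (Nd (Lf a) (Lf a)) (Nd (Lf a) (Lf a))) (Nd (Nd (Lf a) (Lf a)) (Nd (Lf a) (Lf a)))) (Nd (Nd (Nd (Lf a) (Lf a)) (Nd (Lf a) (Lf a))) (Nd (Nd (Lf a) (Lf a)) (Nd (Lf a) (Lf b)))))) (Nd (Nd (Nd (Nd (Nd (Lf a) (Lf a)) (Nd (Lf a) (Lf a))) (Nd (Nd (Lf a) (Lf a)) (Nd (Lf a) (Lf a)))) (Nd (Nd (Nd (Lf a) (Lf a)) (Nd (Lf a) (Lf a))) (Nd (Nd (Lf a) (Lf a)) (Nd (Lf a) (Lf b))))) (Nd (Nd (Nd (Nd (Lf a) (Lf a)) (Nd (Lf a) (Lf a))) (Nd (Nd (Lf a) (Lf a)) (Nd (Lf a) (Lf c)))) (Nd (Nd (Nd (Lf a) (Lf a)) (Nd (Lf a) (Lf c))) (Nd (Nd (Lf a) (Lf c)) (Nd (Lf b) (Lf b))))))) (Nd (Nd (Nd (Nd (Nd (Nd (Lf a) (Lf a)) (Nd (Lf a) (Lf a))) (Nd (Nd (Lf a) (Lf a)) (Nd (Lf a) (Lf a)))) (Nd (Nd (Nd (Lf a) (Lf a)) (Nd (Lf a) (Lf a))) (Nd (Nd (Lf a) (Lf a)) (Nd (Lf a) (Lf c))))) (Nd (Nd (Nd (Nd (Lf a) (Lf a)) (Nd (Lf a) (Lf a))) (Nd (Nd (Lf a) (Lf a))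 (Nd (Lf a) (Lf b)))) (Nd (Nd (Nd (Lf a) (Lf a)) (Nd (Lf a) (Lf c))) (Nd (Nd (Lf a) (Lf b)) (Nd (Lf b) (Lf c)))))) (Nd (Nd (Nd (Nd (Nd (Lf a) (Lf a)) (Nd (Lf a) (Lf a))) (Nd (Nd (Lf a) (Lf a)) (Nd (Lf a) (Lf c)))) (Nd (Nd (Nd (Lf a) (Lf a)) (Nd (Lf a) (Lf b))) (Nd (Nd (Lf a) (Lf c)) (Nd (Lf b) (Lf b))))) (Nd (Nd (Nd (Nd (Lf a) (Lf a)) (Nd (Lf a) (Lf b))) (Nd (Nd (Lf a) (Lf c)) (Nd (Lf c) (Lf b)))) (Nd (Nd (Nd (Lf a) (Lf b)) (Nd (Lf b) (Lf c))) (Nd (Nd (Lf b) (Lf c)) (Nd (Lf c) (Lf b))))))))) (Nd (Nd (Nd (Nd (Nd (Nd (Nd (Nd (Lf a) (Lf a)) (Nd (Lf a) (Lf a))) (Nd (Nd (Lf a) (Lf a)) (Nd (Lf a) (Lf a)))) (Nd (Nd (Nd (Lf a) (Lf a)) (Nd (Lf a) (Lf a))) (Nd (Nd (Lf a) (Lf a)) (Nd (Lf a) (Lf a))))) (Nd (Nd (Nd (Nd (Lf a) (Lf a)) (Nd (Lf a) (Lf a))) (Nd (Nd (Lf a) (Lf a)) (Nd (Lf a) (Lf a)))) (Nd (Nd (Nd (Lf a) (Lf a)) (Nd (Lf a) (Lf a))) (Nd (Nd (Lf a) (Lf a)) (Nd (Lf a) (Lf b)))))) (Nd (Nd (Nd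 (Nd (Nd (Lf a) (Lf a)) (Nd (Lf a) (Lf a))) (Nd (Nd (Lf a) (Lf a)) (Nd (Lf a) (Lf a)))) (Nd (Nd (Nd (Lf a) (Lf a)) (Nd (Lf a) (Lf a))) (Nd (Nd (Lf a) (Lf a)) (Nd (Lf a) (Lf c))))) (Nd (Nd (Nd (Nd (Lf a) (Lf a)) (Nd (Lf a) (Lf a))) (Nd (Nd (Lf a) (Lf a)) (Nd (Lf a) (Lf b)))) (Nd (Nd (Nd (Lf a) (Lf a)) (Nd (Lf a) (Lf c))) (Nd (Nd (Lf a) (Lf b)) (Nd (Lf c) (Lf c))))))) (Nd (Nd (Nd (Nd (Nd (Nd (Lf a) (Lf a)) (Nd (Lf a) (Lf a))) (Nd (Nd (Lf a) (Lf a)) (Nd (Lf a) (Lf a)))) (Nd (Nd (Nd (Lf a) (Lf a)) (Nd (Lf a) (Lf a))) (Nd (Nd (Lf a) (Lf a)) (Nd (Lf a) (Lf c))))) (Nd (Nd (Nd (Nd (Lf a) (Lf a)) (Nd (Lf a) (Lf a))) (Nd (Nd (Lf a) (Lf a)) (Nd (Lf a) (Lf c)))) (Nd (Nd (Nd (Lf a) (Lf a)) (Nd (Lf a) (Lf b))) (Nd (Nd (Lf a) (Lf c)) (Nd (Lf b) (Lf b)))))) (Nd (Nd (Nd (Nd (Nd (Lf a) (Lf a)) (Nd (Lf a) (Lf a))) (Nd (Nd (Lf a) (Lf a)) (Nd (Lf a) (Lf b)))) (Nd (Nd (Nd (Lf a) (Lf a)) (Nd (Lf a) (Lf b))) (Nd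 (Nd (Lf a) (Lf c)) (Nd (Lf b) (Lf b))))) (Nd (Nd (Nd (Nd (Lf a) (Lf a)) (Nd (Lf a) (Lf b))) (Nd (Nd (Lf a) (Lf c)) (Nd (Lf b) (Lf c)))) (Nd (Nd (Nd (Lf a) (Lf c)) (Nd (Lf c) (Lf c))) (Nd (Nd (Lf c) (Lf b)) (Nd (Lf b) (Lf b)))))))) (Nd (Nd (Nd (Nd (Nd (Nd (Nd (Lf a) (Lf a)) (Nd (Lf a) (Lf a))) (Nd (Nd (Lf a) (Lf a)) (Nd (Lf a) (Lf a)))) (Nd (Nd (Nd (Lf a) (Lf a)) (Nd (Lf a) (Lf a))) (Nd (Nd (Lf a) (Lf a)) (Nd (Lf a) (Lf c))))) (Nd (Nd (Nd (Nd (Lf a) (Lf a)) (Nd (Lf a) (Lf a))) (Nd (Nd (Lf a) (Lf a)) (Nd (Lf a) (Lf c)))) (Nd (Nd (Nd (Lf a) (Lf a)) (Nd (Lf a) (Lf b))) (Nd (Nd (Lf a) (Lf c)) (Nd (Lf b) (Lf c)))))) (Nd (Nd (Nd (Nd (Nd (Lf a) (Lf a)) (Nd (Lf a) (Lf a))) (Nd (Nd (Lf a) (Lf a)) (Nd (Lf a) (Lf b)))) (Nd (Nd (Nd (Lf a) (Lf a)) (Nd (Lf a) (Lf c))) (Nd (Nd (Lf a) (Lf b)) (Nd (Lf c) (Lf b))))) (Nd (Nd (Nd (Nd (Lf a) (Lf a)) (Nd (Lf a) (Lf b))) (Nd (Nd (Lf a) (Lf c)) (Nd (Lf c) (Lf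 c)))) (Nd (Nd (Nd (Lf a) (Lf c)) (Nd (Lf b) (Lf b))) (Nd (Nd (Lf c) (Lf b)) (Nd (Lf c) (Lf c))))))) (Nd (Nd (Nd (Nd (Nd (Nd (Lf a) (Lf a)) (Nd (Lf a) (Lf a))) (Nd (Nd (Lf a) (Lf a)) (Nd (Lf a) (Lf c)))) (Nd (Nd (Nd (Lf a) (Lf a)) (Nd (Lf a) (Lf c))) (Nd (Nd (Lf a) (Lf b)) (Nd (Lf b) (Lf c))))) (Nd (Nd (Nd (Nd (Lf a) (Lf a)) (Nd (Lf a) (Lf b))) (Nd (Nd (Lf a) (Lf b)) (Nd (Lf c) (Lf c)))) (Nd (Nd (Nd (Lf a) (Lf c)) (Nd (Lf b) (Lf b))) (Nd (Nd (Lf c) (Lf b)) (Nd (Lf c) (Lf c)))))) (Nd (Nd (Nd (Nd (Nd (Lf a) (Lf a)) (Nd (Lf a) (Lf b))) (Nd (Nd (Lf a) (Lf b)) (Nd (Lf c) (Lf b)))) (Nd (Nd (Nd (Lf a) (Lf b)) (Nd (Lf b) (Lf c))) (Nd (Nd (Lf c) (Lf c)) (Nd (Lf c) (Lf b))))) (Nd (Nd (Nd (Nd (Lf a) (Lf c)) (Nd (Lf c) (Lf c))) (Nd (Nd (Lf b) (Lf b)) (Nd (Lf b) (Lf b)))) (Nd (Nd (Nd (Lf b) (Lf c)) (Nd (Lf b) (Lf b))) (Nd (Nd (Lf b) (Lf b)) (Nd (Lf b) (Lf c))))))))))).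
Definition clsb (s : seq bool) : atom := look theTree s.
Definition aeqb (x y : atom) : bool :=
  match x, y with e, e | a, a | b, b | c, c => true | _, _ => false end.
Lemma eqaE x y : (x == y) = aeqb x y.
Proof. by apply/eqP/idP; case: x; case: y. Qed.
Definition cycb (x y z : atom) : bool :=
  if aeqb x e then aeqb z y
  else if aeqb y e then aeqb z x
  else if aeqb z e then aeqb x y
  else [|| aeqb x a, aeqb y a | aeqb z a].
Lemma cycE x y z : cyc x y z = cycb x y z.
Proof. by rewrite /cyc !eqaE. Qed.
Fixpoint xorl (s t : seq bool) : seq bool :=
  match s, t with x :: s', y :: t' => (x (+) y) :: xorl s' t' | _, _ => [::] end.
Fixpoint allseqs (n : nat) : seq (seq bool) :=
  if n is n'.+1 then [seq x :: s | x <- [:: false; true], s <- allseqs n'] else [:: [::]].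
Definition allts := allseqs 10.
Definition atoms := [:: e; a; b; c].
Definition tab (t : seq bool) := [seq (clsb u, clsb (xorl t u)) | u <- allts].
Definition intab x y (T : seq (atom * atom)) := has (fun p => aeqb p.1 x && aeqb p.2 y) T.
Definition key_check := all (fun t => let T := tab t in
   all (fun x => all (fun y => cycb x y (clsb t) == intab x y T) atoms) atoms) allts.
Lemma key_comp : key_check. Proof. vm_compute. reflexivity. Qed.
Definition wcheck := all (fun t => [&& aeqb (clsb t) e == (count id t == 0)%N,
   aeqb (clsb t) a == (1 <= count id t <= 6)%N &
   (aeqb (clsb t) b || aeqb (clsb t) c) == (7 <= count id t)%N]) allts.
Lemma wcheck_ok : wcheck. Proof. vm_compute. reflexivity. Qed.
Lemma surj_check z : has (fun t => aeqb (clsb t) z) allts.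
Proof. case: z; vm_compute; reflexivity. Qed.

Lemma F2add (u v : 'F_2) : (u + v != 0) = (u != 0) (+) (v != 0).
Proof. by case: u => [[|[|?]] //] ?; case: v => [[|[|?]] //] ?. Qed.
Lemma F2xx (u : 'F_2) : u + u = 0.
Proof. by case: u => [[|[|?]] //] ?; apply/val_inj. Qed.
Lemma F2eq (u v : 'F_2) : (u != 0) = (v != 0) -> u = v.
Proof. by case: u => [[|[|?]] //] ?; case: v => [[|[|?]] //] ? //= _; apply/val_inj. Qed.
Lemma F2nat (bb : bool) : ((bb%:R : 'F_2) != 0) = bb.
Proof. by case: bb. Qed.

Definition enc (x : G) : seq bool := [seq x ord0 i != 0 | i <- enum 'I_10].
Definition dec (s : seq bool) : G := \row_(i < 10) (nth false s i)%:R.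

Lemma wtE (x : G) : wt x = count id (enc x).
Proof. rewrite /wt /enc count_map enumT cardsE cardE /enum_mem size_filter. by apply: eq_count. Qed.

Lemma xorl_map (T : Type) (f g : T -> bool) s :
  xorl (map f s) (map g s) = map (fun i => f i (+) g i) s.
Proof. by elim: s => //= x s ->. Qed.

Lemma enc_add x y : enc (x + y) = xorl (enc x) (enc y).
Proof. rewrite /enc xorl_map; apply: eq_map => i; by rewrite mxE F2add. Qed.

Lemma enc_inj : injective enc.
Proof.
move=> x y /eq_in_map H; apply/matrixP => i j; rewrite [i]ord1.
by apply: F2eq; apply: H; rewrite mem_enum.
Qed.

Lemma size_enc x : size (enc x) = 10%N.
Proof. by rewrite size_map size_enum_ord. Qed.

Lemma enc_dec s : size s = 10%N -> enc (dec s) = s.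
Proof.
move=> hs; apply: (@eq_from_nth _ false); first by rewrite size_enc hs.
move=> i; rewrite size_enc => lt.
by rewrite (nth_map ord0) ?size_enum_ord // mxE nth_enum_ord // F2nat.
Qed.

Lemma mem_allseqs n s : size s = n -> s \in allseqs n.
Proof.
elim: n s => [|n IH] [|x s] //= [] /IH H.
by case: x; rewrite !mem_cat (map_f (cons _) H) ?orbT.
Qed.

Lemma allseqs_size n s : s \in allseqs n -> size s = n.
Proof.
elim: n s => [|n IH] s /=; first by rewrite inE => /eqP ->.
by rewrite cats0 mem_cat => /orP [] /mapP [t /IH <- ->].
Qed.

Lemma enc_all x : enc x \in allts.
Proof. exact: mem_allseqs (size_enc x). Qed.

Lemma exG (q : pred (seq bool)) : has q allts -> exists g : G, q (enc g).
Proof.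
case/hasP => s Hs Hq; exists (dec s); by rewrite enc_dec // (allseqs_size Hs).
Qed.

Definition cls (g : G) := clsb (enc g).

Lemma addxx (x : G) : x + x = 0.
Proof. by apply/matrixP => i j; rewrite !mxE F2xx. Qed.
Lemma addKx (x y : G) : x + (x + y) = y.
Proof. by rewrite addrA addxx add0r. Qed.

Lemma mem_atoms x : x \in atoms.
Proof. by rewrite /atoms !inE !eqaE; case: x. Qed.

Lemma key (g : G) x y : cyc x y (cls g) = [exists u, (cls u == x) && (cls (g + u) == y)].
Proof.
have := key_comp; rewrite /key_check => /allP Hall.
have /allP H := Hall _ (enc_all g).
have /allP Hx := H x (mem_atoms x).
have /eqP Hxy := Hx y (mem_atoms y).
rewrite cycE /cls Hxy /intab /tab has_map.
apply/hasP/existsP.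
- case=> u Hu /= /andP [h1 h2]; exists (dec u).
  by rewrite /cls enc_add enc_dec ?(allseqs_size Hu) // !eqaE h1 h2.
- case=> u /andP [h1 h2]; exists (enc u); first exact: enc_all.
  by rewrite /= -!eqaE h1 -enc_add.
Qed.

Lemma wt0 (g : G) : (wt g == 0)%N = (g == 0).
Proof.
rewrite wtE /enc -leqn0 leqNgt -has_count has_map.
apply/hasPn/eqP => [H|->].
- apply/matrixP => i j; rewrite [i]ord1 mxE.
  by have := H j (ltac:(by rewrite mem_enum)); rewrite /= negbK => /eqP.
- by move=> i _; rewrite /= mxE eqxx.
Qed.

Lemma wfacts (g : G) : [/\ (cls g == e) = (g == 0),
   (cls g == a) = (1 <= wt g <= 6)%N &
   (cls g == b) || (cls g == c) = (7 <= wt g)%N].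
Proof.
have := wcheck_ok; rewrite /wcheck => /allP Hall.
have := Hall _ (enc_all g).
case/and3P => /eqP h1 /eqP h2 /eqP h3.
by rewrite -wt0 !wtE /cls !eqaE h1 h2 h3.
Qed.

Lemma sumset_cls x y :
  sumset [set g | cls g == x] [set g | cls g == y] = [set g | cyc x y (cls g)].
Proof.
apply/setP => g; rewrite inE key; apply/imset2P/existsP.
- case=> u v; rewrite !inE => hu hv ->; exists u.
  by rewrite hu /= addrC addKx hv.
- case=> u /andP [hu hv]; exists u (g + u); rewrite ?inE //.
  by rewrite addrCA addxx addr0.
Qed.

Definition h (X : RA) : {set G * G} := [set p | cls (p.1 + p.2) \in X].

Lemma cls_surj z : exists g, cls g = z.
Proof.
have [g hg] := exG (surj_check z); exists g; apply/eqP; by rewrite eqaE.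
Qed.

Lemma rep_h : is_representation h.
Proof.
split; [|split; [|split; [|split; [|split]]]].
- move=> X Y hXY; apply/setP => z; have [g hg] := cls_surj z.
  have := congr1 (fun S : {set G * G} => (g, 0 : G) \in S) hXY; by rewrite /= !inE /= addr0 hg.
- by move=> X Y; apply/setP => p; rewrite !inE.
- by move=> X; apply/setP => p; rewrite !inE.
- move=> X Y; apply/setP => [[p1 p2]]; rewrite !inE /=.
  apply/existsP/existsP.
  + case=> x /andP [hx /existsP [y /andP [hy]]].
    rewrite key => /existsP [u /andP [/eqP hu /eqP hv]].
    exists (p1 + u); rewrite !inE /= addKx hu hx /=.
    by rewrite addrAC hv hy.
  + case=> w /andP []; rewrite !inE /= => hx hy.
    exists (cls (p1 + w)); rewrite hx /=; apply/existsP; exists (cls (w + p2)).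
    rewrite hy /= key; apply/existsP; exists (p1 + w); rewrite eqxx /=.
    by rewrite addrACA addxx add0r addrC.
- by move=> X; apply/setP => [[p1 p2]]; rewrite !inE /= addrC.
- apply/setP => [[p1 p2]]; rewrite !inE /=.
  have [h1 _ _] := wfacts (p1 + p2); rewrite h1.
  apply/eqP/eqP => [H|->]; last exact: addxx.
  by rewrite -[p2](addKx p1) H addr0.
Qed.

Local Close Scope ring_scope.

Theorem mainTheorem1 :
  in_Spec_fin 1024 /\
  exists B1 B2 : {set G},
    let A := [set x : G | 1 <= wt x <= 6] in
    [disjoint B1 & B2] /\
    B1 :|: B2 = [set x : G | 7 <= wt x] /\
    sumset A A = [set: G] /\
    sumset A B1 = [set: G] :\ 0%R /\ sumset A B2 = [set: G] :\ 0%R /\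
    sumset B1 B1 = A :|: [set 0%R] /\ sumset B2 B2 = A :|: [set 0%R] /\
    sumset B1 B2 = A /\
    exists h : RA -> {set G * G},
      is_representation h /\ forall z : atom, h [set z] = grp_img A B1 B2 z.
Proof.
have hA : [set x : G | 1 <= wt x <= 6] = [set g | cls g == a].
  by apply/setP => g; rewrite !inE; case: (wfacts g).
have h0 : [set 0%R : G] = [set g | cls g == e].
  by apply/setP => g; rewrite !inE; case: (wfacts g) => ->.
have hT : [set: G] :\ 0%R = [set g | cls g != e].
  by apply/setP => g; rewrite !inE andbT; case: (wfacts g) => ->.
have hB : [set x : G | 7 <= wt x] = [set g | (cls g == b) || (cls g == c)].
  by apply/setP => g; rewrite !inE; case: (wfacts g).
split.
  exists ('rV['F_2]_10 : finType); split.
    by rewrite card_mx card_Fp.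
  by exists h; exact: rep_h.
exists [set g | cls g == b], [set g | cls g == c].
move=> A; rewrite /A hA h0 hB !sumset_cls.
split; first by rewrite -setI_eq0; apply/eqP/setP => g; rewrite !inE !eqaE; case: (cls g).
do 7 (split; first by apply/setP => g; rewrite !inE ?cycE ?eqaE; case: (cls g)).
exists h; split; first exact: rep_h.
case; apply/setP => [[p1 p2]]; rewrite !inE //=.
case: (wfacts (p1 + p2)%R) => -> _ _.
apply/eqP/eqP => [H|->]; last exact: addxx.
by rewrite -[p2](addKx p1) H addr0.
Qed.
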